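(* Let $1<n\leq m$ and let $v\in Z_{n,m}$ with $h(v)\geq h_{n,m}$ and $\sum_{i\in I_c(v)}v_i=n$. Then $d(v,0)\leq D_{n,m}$.
   Context: Elements of $\mathbb{Z}_n$ are identified with representatives in $\{0,\dots,n-1\}$ (so $v_0,v_{m+1}$ are such integers in sums). $Z_{n,m}$ has vertices $u=(u_0,\dots,u_{m+1})\in\mathbb{Z}_n\times\{-1,0,1\}^m\times\mathbb{Z}_n$ with $\sum u_i\equiv0\pmod n$; $u,v$ adjacent if there is $0\leq i\leq m$ with $u_j=v_j$ for $j\notin\{i,i+1\}$ and either ($u_i=v_i+1$, $u_{i+1}=v_{i+1}-1$) or ($u_i=v_i-1$, $u_{i+1}=v_{i+1}+1$), arithmetic in coordinates $0,m+1$ in $\mathbb{Z}_n$. $d$ is graph distance, $0$ the all-zero vertex. $\operatorname{Piv}(v)$ is the set of $-1\le p\le m+1$ with $n\mid\sum_{i=0}^pv_i$. $p_l(v)=\max\{p\in\operatorname{Piv}(v):p<\frac m2\}$, $p_r(v)=\min\{p\in\operatorname{Piv}(v):p\ge\frac m2\}$, $I_c(v)=\{p_l(v)+1,\dots,p_r(v)\}$, $h(v)=\min\{|p-\frac m2|:p\in\operatorname{Piv}(v)\}$, $h_{n,m}=\frac n2$ if $2\mid(m-n)$ and $\frac{n+1}2$ otherwise. $u^{(0)}$: $u_i=1$ ($1\le i\le m$), $u_0\equiv-\lfloor\frac{m-n}2\rfloor\pmod n$; for $n<m$, $m-n$ odd, $u^{(1)}$: $u_{\lceil(m+1)/2\rceil}=0$,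 other $u_i=1$ ($1\le i\le m$), $u_0\equiv-\lfloor\frac{m-n}2\rfloor\pmod n$. $D_{n,m}=d(u^{(0)},0)$ if $2\mid(m-n)$, else $\max\{d(u^{(0)},0),d(u^{(1)},0)\}$. *)

(* Defs.v *)
From HB Require Import structures.
From mathcomp Require Import all_boot all_order all_algebra.
From Stdlib Require Import ClassicalEpsilon.
Set Implicit Arguments. Unset Strict Implicit. Unset Printing Implicit Defensive.
Import Order.TTheory GRing.Theory Num.Theory.
Local Open Scope ring_scope.

(* A vertex u = (u_0,...,u_{m+1}) of Z_{n,m} is represented by a sequence of
   integers of length m+2; u_0 and u_{m+1} are the representatives in
   {0,...,n-1} of elements of Z_n, u_1..u_m are in {-1,0,1}. *)
Definition coord (u : seq int) (i : nat) : int := nth 0 u i.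

Definition is_vertex (n m : nat) (u : seq int) : Prop :=
  [/\ size u = m.+2,
      0 <= coord u 0 < n%:Z,
      0 <= coord u m.+1 < n%:Z,
      (forall i : nat, (1 <= i <= m)%N -> -1 <= coord u i <= 1)
    & (n%:Z %| \sum_(i < m.+2) coord u i)%Z].

Definition coord_eq (n m : nat) (j : nat) (a b : int) : bool :=
  if (j == 0%N) || (j == m.+1) then (a == b %[mod n%:Z])%Z else a == b.

Definition adj (n m : nat) (u v : seq int) : Prop :=
  is_vertex n m u /\ is_vertex n m v /\
  exists i : nat, (i <= m)%N /\
    (forall j : nat, (j < m.+2)%N -> j <> i -> j <> i.+1 -> coord u j = coord v j) /\
    ((coord_eq n m i (coord u i) (coord v i + 1) /\
      coord_eq n m i.+1 (coord u i.+1) (coord v i.+1 - 1)) \/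
     (coord_eq n m i (coord u i) (coord v i - 1) /\
      coord_eq n m i.+1 (coord u i.+1) (coord v i.+1 + 1))).

Inductive walk (n m : nat) : nat -> seq int -> seq int -> Prop :=
  | walk0 u : is_vertex n m u -> walk n m 0 u u
  | walkS k u w v : adj n m u w -> walk n m k w v -> walk n m k.+1 u v.

(* graph distance: the least length of a walk (0 if there is none; the graph
   Z_{n,m} is connected, and the main statement also asserts reachability) *)
Definition dist (n m : nat) (u v : seq int) : nat :=
  epsilon (inhabits 0%N)
    (fun k => walk n m k u v /\ forall j, walk n m j u v -> (k <= j)%N).

Definition zero_vertex (m : nat) : seq int := nseq m.+2 0.

Definition psum (v : seq int) (k : nat) : int := \sum_(i < k) coord v i.

Definition piv (n m : nat) (v : seq int) (p : int) : bool :=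
  (-1 <= p <= m.+1%:Z) && (n%:Z %| psum v (absz (p + 1)))%Z.

(* p_l(v) = max {p in Piv(v) : p < m/2}  (p = k - 1, k < m+3) *)
Definition p_l (n m : nat) (v : seq int) : int :=
  (\max_(k < m.+3 | piv n m v (k%:Z - 1) && ((k%:Z - 1) * 2 < m%:Z)) (k : nat) : nat)%:Z - 1.

(* p_r(v) = min {p in Piv(v) : p >= m/2}  (p = k - 1, k < m+3) *)
Definition p_r (n m : nat) (v : seq int) : int :=
  (\big[minn/m.+2]_(k < m.+3 | piv n m v (k%:Z - 1) && (m%:Z <= (k%:Z - 1) * 2)) (k : nat) : nat)%:Z - 1.

Definition sum_Ic (n m : nat) (v : seq int) : int :=
  \sum_(i < m.+2 | (p_l n m v < i%:Z <= p_r n m v)) coord v i.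

(* h(v) >= x, where h(v) = min {|p - m/2| : p in Piv(v)} *)
Definition h_ge (n m : nat) (v : seq int) (x : rat) : Prop :=
  forall p : int, piv n m v p -> x <= `| p%:~R - (m%:R / 2 : rat) |.

Definition h_nm (n m : nat) : rat :=
  if ~~ odd (m - n) then n%:R / 2 else n.+1%:R / 2.

(* u^(0): u_i = 1 (1<=i<=m), u_0 = -floor((m-n)/2) mod n, u_{m+1} the
   unique value in {0..n-1} making the coordinate sum divisible by n *)
Definition u0_first (n m : nat) : int := ((- ((m - n) %/ 2)%N%:Z) %% n%:Z)%Z.

Definition u_0 (n m : nat) : seq int :=
  u0_first n m :: nseq m 1 ++ [:: ((- m%:Z - u0_first n m) %% n%:Z)%Z].

(* u^(1): as u^(0) but u_{ceil((m+1)/2)} = 0 *)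
Definition u_1 (n m : nat) : seq int :=
  u0_first n m ::
  [seq (if i == (m.+1)./2 + (odd m.+1) then 0 else 1) | i <- iota 1 m]
  ++ [:: ((- (m%:Z - 1) - u0_first n m) %% n%:Z)%Z].

Definition D_nm (n m : nat) : nat :=
  if ~~ odd (m - n) then dist n m (u_0 n m) (zero_vertex m)
  else maxn (dist n m (u_0 n m) (zero_vertex m))
            (dist n m (u_1 n m) (zero_vertex m)).

(* Main.v *)
Require Import Defs.
From HB Require Import structures.
From mathcomp Require Import all_boot all_order all_algebra.
Import Order.TTheory GRing.Theory Num.Theory.
Local Open Scope ring_scope.
From mathcomp Require Import zify ring.
From Stdlib Require Import ClassicalEpsilon.
Local Notation coord := Defs.coord.
Set Implicit Arguments. Unset Strict Implicit. Unset Printing Implicit Defensive.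

Lemma psumS (v : seq int) k : psum v k.+1 = psum v k + coord v k.
Proof. by rewrite /psum big_ord_recr. Qed.

Lemma psum0 (v : seq int) : psum v 0 = 0.
Proof. by rewrite /psum big_ord0. Qed.

Lemma sum_ind (k i : nat) (a : int) :
  \sum_(q < k) (((q : nat) == i)%:Z * a) = (i < k)%N%:Z * a.
Proof.
elim: k => [|k IH]; first by rewrite big_ord0 ltn0 mul0r.
rewrite big_ord_recr /= IH.
have [->|ne] := eqVneq k i; first by rewrite ltnSn ltnn; lia.
have -> : (i < k.+1)%N = (i < k)%N by rewrite ltnS leq_eqVlt eq_sym (negbTE ne).
rewrite mul0r addr0. done. Qed.

Lemma psum_mod (v w : seq int) (i K : nat) :
  (forall q, (q < K)%N -> q <> i -> q <> i.+1 -> coord w q = coord v q) ->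
  forall k, (k <= K)%N ->
  psum w k = psum v k + (i < k)%N%:Z * (coord w i - coord v i)
                      + (i.+1 < k)%N%:Z * (coord w i.+1 - coord v i.+1).
Proof.
move=> Heq; elim=> [|k IH] hk; first by rewrite !psum0 /=; lia.
rewrite !psumS IH; last by apply: ltnW.
have [->|ne1] := eqVneq k i.
  rewrite ltnSn ltnn ltnS ltnNge leqnSn /=; lia.
have [->|ne2] := eqVneq k i.+1.
  rewrite ltnSn ltnn ltnS leqnSn /=; lia.
rewrite (Heq k hk); last 2 first.
- by move=> E; move: ne1; rewrite E eqxx.
- by move=> E; move: ne2; rewrite E eqxx.
have -> : (i < k.+1)%N = (i < k)%N by rewrite ltnS leq_eqVlt eq_sym (negbTE ne1).
have -> : (i.+1 < k.+1)%N = (i.+1 < k)%N by rewrite ltnS leq_eqVlt eq_sym (negbTE ne2).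
lia.
Qed.

Lemma sum_ind1 (m p : nat) : (p <= m)%N ->
  \sum_(q < m.+1) ((q : nat) == p)%:Z = 1.
Proof.
move=> hp. have := sum_ind m.+1 p 1. rewrite ltnS hp.
under eq_bigr do rewrite mulr1. by rewrite mulr1.
Qed.

Lemma ivt (f : nat -> int) (a b : nat) (t : int) : (a <= b)%N ->
  (forall i, (a <= i)%N -> (i < b)%N -> f i.+1 <= f i + 1) ->
  f a <= t -> t <= f b -> exists i, (a <= i <= b)%N /\ f i = t.
Proof.
elim: b => [|b IH] hab hs hat htb.
  move: hab; rewrite leqn0 => /eqP E; subst a.
  exists 0%N; split => //; lia.
have [E|hab'] := eqVneq a b.+1.
  subst a; exists b.+1; split; first by rewrite leqnn.
  lia.
have hab2 : (a <= b)%N by move: hab hab'; rewrite leq_eqVlt => /orP [/eqP->|]; rewrite ?eqxx.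
have [htb'|htb'] := lerP t (f b).
  have [i [hi1 hi2]] := IH hab2 (fun i h1 h2 => hs i h1 (ltnW h2)) hat htb'.
  exists i; split => //; lia.
have := hs b hab2 (ltnSn b). move=> h.
exists b.+1; split; first by rewrite leqnn andbT; apply: (leq_trans hab2).
lia.
Qed.

Lemma vx_mid n m v i : is_vertex n m v -> (1 <= i <= m)%N -> -1 <= coord v i <= 1.
Proof. by case=> _ _ _ H _ /H. Qed.

Lemma lipschitz n m v a b : is_vertex n m v -> (1 <= a)%N -> (a <= b)%N -> (b <= m.+1)%N ->
  `|psum v b - psum v a| <= (b - a)%N%:Z.
Proof.
move=> hv ha; elim: b => [|b IH] hab hb; first by lia.
have [E|ne] := eqVneq a b.+1; first by subst a; rewrite subrr subnn.
have hab2 : (a <= b)%N by move: hab ne; rewrite leq_eqVlt => /orP [/eqP->|]; rewrite ?eqxx.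
have := IH hab2 (ltnW hb).
have hb1 : (1 <= b <= m)%N by apply/andP; split; [apply: leq_trans hab2|].
have := vx_mid hv hb1. rewrite psumS => h1 h2. lia.
Qed.

Definition cost n m v (j : int) : int := \sum_(p < m.+1) `|psum v p.+1 - j * n%:Z|.
Definition dcost n m u w (j : int) : int :=
  \sum_(p < m.+1) `|psum u p.+1 - psum w p.+1 - j * n%:Z|.

Lemma coord_eq_lin n m j a b : coord_eq n m j a b -> exists J : int, a = b + J * n%:Z.
Proof.
rewrite /coord_eq; case: ifP => _.
  rewrite eqz_mod_dvd => /dvdzP [q hq]. exists q. lia.
by move=> /eqP ->; exists 0; lia.
Qed.

Lemma coord_eq_ex n m j a b : (1 <= j <= m)%N -> coord_eq n m j a b -> a = b.
Proof.
move=> /andP [h1 h2]; rewrite /coord_eq.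
have -> : (j == 0%N) || (j == m.+1) = false by lia.
by move/eqP.
Qed.

Lemma adj_lb n m u w : adj n m u w -> exists j, dcost n m u w j <= 1.
Proof.
move=> [hu [hw [i [hi [heq hc]]]]].
have hps := psum_mod (v:=w) (w:=u) (i:=i) (K:=m.+2) heq.
have [s [J [hs hJ hJ0 hnx]]] : exists (s J : int), [/\ s = 1 \/ s = -1,
   coord u i - coord w i = s + J * n%:Z, (i != 0%N -> J = 0) &
   ((i.+1 <= m)%N -> coord u i.+1 - coord w i.+1 = - s)].
  case: hc => [[h1 h2]|[h1 h2]].
  - have [J hJ] := coord_eq_lin h1.
    exists 1, (if i == 0%N then J else 0); split; first by left.
    + case: eqP => [_|ne]; first by lia.
      have := coord_eq_ex (j:=i) (n:=n) (m:=m) (a:=coord u i) (b:=coord w i + 1).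
      rewrite h1 => ->; [lia | | done]. apply/andP; split; [|done]. by case: i ne {h1 h2 hJ hps heq} hi.
    + by case: eqP.
    + move=> him. have := coord_eq_ex (j:=i.+1) (n:=n) (m:=m) (a:=coord u i.+1) (b:=coord w i.+1 - 1).
      rewrite h2 => ->; [lia | | done]. by apply/andP.
  - have [J hJ] := coord_eq_lin h1.
    exists (-1), (if i == 0%N then J else 0); split; first by right.
    + case: eqP => [_|ne]; first by lia.
      have := coord_eq_ex (j:=i) (n:=n) (m:=m) (a:=coord u i) (b:=coord w i - 1).
      rewrite h1 => ->; [lia | | done]. apply/andP; split; [|done]. by case: i ne {h1 h2 hJ hps heq} hi.
    + by case: eqP.
    + move=> him. have := coord_eq_ex (j:=i.+1) (n:=n) (m:=m) (a:=coord u i.+1) (b:=coord w i.+1 + 1).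
      rewrite h2 => ->; [lia | | done]. by apply/andP.
exists J. rewrite /dcost.
have -> : \sum_(p < m.+1) `|psum u p.+1 - psum w p.+1 - J * n%:Z|
        = \sum_(p < m.+1) ((p : nat) == i)%:Z.
  apply: eq_bigr => p _. have hp := ltn_ord p.
  rewrite hps; last by lia.
  have E1 : (i.+1 < p.+1)%N -> coord u i.+1 - coord w i.+1 = -s by move=> h; apply hnx; lia.
  case: (eqVneq i 0%N) => hi0; last (have := hJ0 hi0); lia.
by rewrite sum_ind1.
Qed.

Lemma walk_lb n m N u w : walk n m N u w -> exists j, dcost n m u w j <= N%:Z.
Proof.
elim=> {N u w} [u hu|N u w v ha hw [j2 IH]].
  exists 0; rewrite /dcost big1 // => p _; lia.
have [j1 h1] := adj_lb ha.
exists (j1 + j2).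
apply: (le_trans (y := dcost n m u w j1 + dcost n m w v j2)); last by lia.
rewrite /dcost -big_split /=. apply: ler_sum => p _. lia.
Qed.

Lemma mod_spec (x : int) (n : nat) : (0 < n)%N ->
  exists q : int, (x %% n%:Z)%Z = x - q * n%:Z /\ 0 <= (x %% n%:Z)%Z < n%:Z.
Proof.
move=> hn; exists (x %/ n%:Z)%Z; split.
  by rewrite {2}(divz_eq x n%:Z) addrC addKr.
rewrite modz_ge0 /=; last by lia.
by rewrite ltz_pmod //; lia.
Qed.

Lemma coord_eq_of n m j a b (J : int) : a = b + J * n%:Z ->
  (~~ ((j == 0%N) || (j == m.+1)) -> J = 0) -> coord_eq n m j a b.
Proof.
move=> hab hJ; rewrite /coord_eq; case: ifP => h.
  rewrite eqz_mod_dvd; apply/dvdzP; exists J; lia.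
by rewrite hJ ?h // in hab; apply/eqP; lia.
Qed.

Lemma coord_mkseq (f : nat -> int) k q : (q < k)%N -> coord (mkseq f k) q = f q.
Proof. by move=> h; rewrite /Defs.coord nth_mkseq. Qed.

Lemma step n m v p (s : int) : (1 < n)%N -> is_vertex n m v -> (p <= m)%N ->
  s = 1 \/ s = -1 ->
  ((1 <= p)%N -> 0 <= s * coord v p) -> ((p.+1 <= m)%N -> s * coord v p.+1 <= 0) ->
  exists w (d : int), adj n m v w /\
    forall q, (q <= m)%N -> psum w q.+1 = psum v q.+1 - s * (q == p)%:Z + d * n%:Z.
Proof.
move=> hn hv hp hs hc1 hc2.
have hn0 : (0 < n)%N by lia.
set A := if p == 0%N then (((coord v 0 - s) %% n%:Z)%Z - coord v 0) else - s.
set B := if p == m then (((coord v m.+1 + s) %% n%:Z)%Z - coord v m.+1) else s.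
have [d [hA hd]] : exists d : int, A = - s + d * n%:Z /\ (p != 0%N -> d = 0).
  rewrite /A; case: eqP => hp0.
    have [q [hq _]] := mod_spec (coord v 0 - s) hn0.
    exists (-q); split => //; lia.
  by exists 0; split => //; lia.
have [d' [hB hd']] : exists d : int, B = s + d * n%:Z /\ (p != m -> d = 0).
  rewrite /B; case: eqP => hp0.
    have [q [hq _]] := mod_spec (coord v m.+1 + s) hn0.
    exists (-q); split => //; lia.
  by exists 0; split => //; lia.
pose f q := coord v q + (q == p)%:Z * A + (q == p.+1)%:Z * B.
pose w := mkseq f m.+2.
have hw : forall q, (q < m.+2)%N -> coord w q = f q by move=> q hq; apply: coord_mkseq.
have heq : forall q, (q < m.+2)%N -> q <> p -> q <> p.+1 -> coord w q = coord v q.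
  move=> q hq h1 h2; rewrite hw // /f.
  have -> : (q == p) = false by apply/eqP.
  have -> : (q == p.+1) = false by apply/eqP.
  lia.
have hwp : coord w p = coord v p + A.
  rewrite hw /f; last by lia.
  rewrite eqxx; have -> : (p == p.+1) = false by lia. lia.
have hwp1 : coord w p.+1 = coord v p.+1 + B.
  rewrite hw /f; last by lia.
  rewrite eqxx; have -> : (p.+1 == p) = false by lia. lia.
have hps := psum_mod heq.
case: (hv) => hsz h0 hm1 hmid hdiv.
have hvw : is_vertex n m w.
  split.
  - by rewrite size_mkseq.
  - case: (eqVneq p 0%N) => hp0.
      subst p. rewrite hwp /A eqxx.
      have [q [_ hq]] := mod_spec (coord v 0 - s) hn0. lia.
    rewrite heq //; lia.
  - case: (eqVneq p m) => hpm.
      subst p. rewrite hwp1 /B eqxx.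
      have [q [_ hq]] := mod_spec (coord v m.+1 + s) hn0. lia.
    rewrite heq //; lia.
  - move=> i hi.
    have := hmid i hi.
    case: (eqVneq i p) => hip.
      subst i. rewrite hwp /A.
      have -> : (p == 0%N) = false by lia.
      have := hc1 (ltac:(lia)). lia.
    case: (eqVneq i p.+1) => hip1.
      subst i. rewrite hwp1 /B.
      have -> : (p == m) = false by lia.
      have := hc2 (ltac:(lia)). lia.
    rewrite heq //; [lia | exact/eqP | exact/eqP].
  - have := hps m.+2 (leqnn _).
    rewrite /psum => ->.
    rewrite hwp hwp1.
    move/dvdzP: hdiv => [q hq].
    apply/dvdzP; exists (q + d + d').
    have -> : (p < m.+2)%N by lia.
    have -> : (p.+1 < m.+2)%N by lia.
    rewrite /psum in hq. lia.
exists w, d; split.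
  split => //; split => //.
  exists p; split => //; split.
    by move=> q hq h1 h2; rewrite heq.
  case: hs => hs; [left | right]; subst s; split.
  - apply: (coord_eq_of (J := - d)); first by lia.
    move=> h; rewrite hd //; lia.
  - apply: (coord_eq_of (J := - d')); first by lia.
    move=> h; rewrite hd' //; lia.
  - apply: (coord_eq_of (J := - d)); first by lia.
    move=> h; rewrite hd //; lia.
  - apply: (coord_eq_of (J := - d')); first by lia.
    move=> h; rewrite hd' //; lia.
move=> q hq.
rewrite hps; last by lia.
rewrite hwp hwp1.
have E1 : (p.+1 < q.+1)%N -> d' = 0 by move=> h; apply: hd'; lia.
have E2 : (p != 0%N) -> d = 0 by [].
case: (eqVneq p 0%N) => hp0; last (have := E2 hp0); lia.
Qed.

Lemma small_mul (j : int) (n : nat) : (0 < n)%N -> 0 <= j * n%:Z < n%:Z -> j = 0.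
Proof. move=> hn h. case: (ltrgtP j 0) => hj; try nia. Qed.

Lemma argmax (f : nat -> int) (m : nat) :
  exists p, (p <= m)%N /\ forall q, (q <= m)%N -> f q <= f p.
Proof.
elim: m => [|m [p [hp H]]]; first by exists 0%N; split => // q; rewrite leqn0 => /eqP ->.
have [hl|hl] := lerP (f m.+1) (f p).
  exists p; split; first by lia.
  move=> q; rewrite leq_eqVlt => /orP [/eqP ->|hq] //. by apply: H.
exists m.+1; split => // q; rewrite leq_eqVlt => /orP [/eqP ->|hq] //.
apply: le_trans (H q hq) _. exact: ltW.
Qed.

Lemma psum_zero m k : psum (zero_vertex m) k = 0.
Proof.
rewrite /psum big1 // => i _. by rewrite /Defs.coord /zero_vertex nth_nseq; case: ifP.
Qed.

Lemma dcost_zero n m u j : dcost n m u (zero_vertex m) j = cost n m u j.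
Proof. by apply: eq_bigr => p _; rewrite psum_zero subr0. Qed.

Lemma vx_zero n m : (0 < n)%N -> is_vertex n m (zero_vertex m).
Proof.
move=> hn; split.
- by rewrite size_nseq.
- rewrite /Defs.coord /zero_vertex nth_nseq /=; lia.
- rewrite /Defs.coord /zero_vertex nth_nseq ltnSn; lia.
- by move=> i _; rewrite /Defs.coord /zero_vertex nth_nseq; case: ifP.
- have := psum_zero m m.+2. rewrite /psum => ->. exact: dvdz0.
Qed.

Lemma cost_ge0 n m v j : 0 <= cost n m v j.
Proof. by apply: sumr_ge0 => p _. Qed.

Lemma walk_ub n m (N : nat) : (1 < n)%N -> forall v j, is_vertex n m v ->
  cost n m v j = N%:Z -> walk n m N v (zero_vertex m).
Proof.
move=> hn; elim: N => [|N IH] v j hv hc.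
  have h0 : forall p, (p <= m)%N -> psum v p.+1 = j * n%:Z.
    move=> p hp.
    have := psumr_eq0P (P := xpredT) (F := fun p : 'I_m.+1 => `|psum v p.+1 - j * n%:Z|)
       (fun _ _ => normr_ge0 _) hc (i := Ordinal (n:=m.+1) (m:=p) (ltac:(lia))) isT.
    move=> /= /eqP. rewrite normr_eq0 subr_eq0. by move/eqP.
  case: (hv) => hsz h0c hm1 hmid hdiv.
  have hc0 : coord v 0 = 0.
    have := h0 0%N isT. rewrite psumS psum0 add0r => E.
    rewrite E in h0c *. have -> := small_mul (n:=n) (ltac:(lia)) h0c. lia.
  have hj : j * n%:Z = 0 by have := h0 0%N isT; rewrite psumS psum0 hc0; lia.
  have hcm : coord v m.+1 = 0.
    move: hdiv. rewrite -/(psum v m.+2) psumS h0 // hj add0r => /dvdzP [q hq].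
    rewrite hq in hm1 *. have -> := small_mul (n:=n) (ltac:(lia)) hm1. lia.
  have -> : v = zero_vertex m.
    apply: (@eq_from_nth _ 0); first by rewrite hsz size_nseq.
    move=> i; rewrite hsz => hi.
    rewrite /zero_vertex nth_nseq hi.
    case: (eqVneq i 0%N) => [->|hi0]; first exact: hc0.
    case: (eqVneq i m.+1) => [->|hi1]; first exact: hcm.
    have -> : i = i.-1.+1 by lia.
    have := h0 i.-1.+1 (ltac:(lia)). have := h0 i.-1 (ltac:(lia)).
    rewrite (psumS v i.-1.+1). rewrite /Defs.coord. lia.
  apply: walk0. apply: vx_zero. lia.
have [pM [hpM HM]] := argmax (fun p => psum v p.+1) m.
have [pm [hpm Hm]] := argmax (fun p => - psum v p.+1) m.
have key : forall p s, (p <= m)%N -> s = 1 \/ s = -1 ->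
    0 < s * (psum v p.+1 - j * n%:Z) ->
    (forall q, (q <= m)%N -> s * psum v q.+1 <= s * psum v p.+1) ->
    walk n m N.+1 v (zero_vertex m).
  move=> p s hp hs hpos hmax.
  have hc1 : (1 <= p)%N -> 0 <= s * coord v p.
    move=> h1. have := hmax p.-1 (ltac:(lia)). have -> : p.-1.+1 = p by lia.
    have := psumS v p.
    case: hs => -> ; lia.
  have hc2 : (p.+1 <= m)%N -> s * coord v p.+1 <= 0.
    move=> h1. have := hmax p.+1 h1. have := psumS v p.+1.
    case: hs => -> ; lia.
  have [w [d [hadj hw]]] := step hn hv hp hs hc1 hc2.
  apply: (walkS hadj). apply: (IH w (j + d)); first by case: hadj => _ [].
  rewrite /cost.
  have -> : \sum_(q < m.+1) `|psum w q.+1 - (j + d) * n%:Z|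
     = \sum_(q < m.+1) (`|psum v q.+1 - j * n%:Z| - ((q : nat) == p)%:Z).
    apply: eq_bigr => q _. have hq0 := ltn_ord q. rewrite hw; last by lia.
    case: (eqVneq (q : nat) p) => hq.
      rewrite hq. case: hs hpos => -> ; lia.
    lia.
  rewrite sumrB sum_ind1 //. rewrite /cost in hc. rewrite hc. lia.
case: (ltrP (j * n%:Z) (psum v pM.+1)) => h1.
  apply: (key pM 1) => //; [by left | lia | move=> q hq; have := HM q hq; lia].
case: (ltrP (psum v pm.+1) (j * n%:Z)) => h2.
  apply: (key pm (-1)) => //; [by right | lia | move=> q hq; have := Hm q hq; lia].
have : cost n m v j = 0.
  apply: big1 => q _. have hq0 := ltn_ord q. have := HM q (ltac:(lia)). have := Hm q (ltac:(lia)). lia.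
rewrite hc. lia.
Qed.

Lemma dist_spec n m u w N : walk n m N u w ->
  walk n m (dist n m u w) u w /\ forall j, walk n m j u w -> (dist n m u w <= j)%N.
Proof.
move=> hw.
pose pb k := if excluded_middle_informative (walk n m k u w) then true else false.
have pbP : forall k, pb k <-> walk n m k u w.
  by move=> k; rewrite /pb; case: excluded_middle_informative.
have ex : exists k, pb k by exists N; apply/pbP.
case: (ex_minnP ex) => k hk hmin.
have : exists k, walk n m k u w /\ forall j, walk n m j u w -> (k <= j)%N.
  exists k; split; first by apply/pbP.
  by move=> j hj; apply: hmin; apply/pbP.
move=> /(epsilon_spec (inhabits 0%N)). by rewrite /dist.
Qed.

Definition gfun (R m p : int) : int := Num.max 0 (Num.max (R - p) (p - (m - R))).
Definition Gs (n m R : nat) : int := \sum_(p < m.+1) (n%:Z + 2 * gfun R%:Z m%:Z p%:Z).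

Lemma v_core n m v (R H Kl Kr : nat) : (1 < n)%N -> is_vertex n m v -> m = (R + R + H)%N ->
  (2 <= H)%N -> (Kl <= R.+1)%N -> (R + H + 1 <= Kr)%N -> (Kr <= m.+2)%N ->
  (n%:Z %| psum v Kl)%Z -> psum v Kr = psum v Kl + n%:Z ->
  (forall i, (Kl < i < Kr)%N -> ~~ (n%:Z %| psum v i)%Z) ->
  exists k0, cost n m v k0 + cost n m v (k0 + 1) <= Gs n m R.
Proof.
move=> hn hv hm hH hKl hKr hKr2 /dvdzP [k0 hk0] hS hnp.
exists k0. rewrite /cost /Gs -big_split /=. apply: ler_sum => p _.
have hp := ltn_ord p.
case: (hv) => hsz h0c hm1 hmid hdiv.
case: (leqP p.+1 Kl) => h1.
  have := lipschitz hv (a := p.+1) (b := Kl) isT h1 (ltac:(lia)).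
  rewrite /gfun. lia.
case: (leqP Kr p.+1) => h2.
  have := lipschitz hv (a := Kr) (b := p.+1) (ltac:(lia)) h2 (ltac:(lia)).
  rewrite /gfun. lia.
have hA : k0 * n%:Z < psum v p.+1.
  rewrite ltNge; apply/negP => hle.
  have hb : k0 * n%:Z + 1 <= psum v Kr.-1.
    have := psumS v Kr.-1. have -> : Kr.-1.+1 = Kr by lia.
    case: (leqP Kr.-1 m) => hk.
      have := vx_mid hv (i := Kr.-1) (ltac:(lia)). lia.
    have -> : Kr.-1 = m.+1 by lia. lia.
  have [i [hi1 hi2]] := ivt (f := psum v) (a := p.+1) (b := Kr.-1) (t := k0 * n%:Z)
     (ltac:(lia)) (fun i h1 h2 => ltac:(have := psumS v i; have := vx_mid hv (i := i) (ltac:(lia)); lia)) hle (ltac:(lia)).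
  have := hnp i (ltac:(lia)). rewrite hi2. by rewrite dvdz_mull.
have hB : psum v p.+1 < k0 * n%:Z + n%:Z.
  rewrite ltNge; apply/negP => hle.
  have hb : psum v Kl.+1 <= k0 * n%:Z + n%:Z.
    have := psumS v Kl.
    case: (eqVneq Kl 0%N) => hk.
      rewrite hk in hk0 *. have := psum0 v. lia.
    have := vx_mid hv (i := Kl) (ltac:(lia)). lia.
  have [i [hi1 hi2]] := ivt (f := psum v) (a := Kl.+1) (b := p.+1) (t := k0 * n%:Z + n%:Z)
     (ltac:(lia)) (fun i h1 h2 => ltac:(have := psumS v i; have := vx_mid hv (i := i) (ltac:(lia)); lia)) hb hle.
  have := hnp i (ltac:(lia)). rewrite hi2. apply/negP/negPn.
  apply/dvdzP; exists (k0 + 1); lia.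
rewrite /gfun. lia.
Qed.

Lemma rev_sum2 m (F : nat -> int) :
  2 * \sum_(p < m.+1) F p = \sum_(p < m.+1) (F p + F (m - p)%N).
Proof.
rewrite big_split /=.
have -> : \sum_(p < m.+1) F (m - p)%N = \sum_(p < m.+1) F p.
  rewrite (reindex_inj (@rev_ord_inj m.+1)) /=.
  apply: eq_bigr => i _. congr F. have := ltn_ord i. lia.
by rewrite mulr_natl mulr2n.
Qed.

Lemma mul_cases (t : int) (n : nat) : t * n%:Z <= 0 \/ n%:Z <= t * n%:Z.
Proof. case: (lerP t 0) => h; [left | right]; nia. Qed.

Lemma coord_u0_mid n m i : (1 <= i <= m)%N -> coord (u_0 n m) i = 1.
Proof.
move=> /andP [h1 h2]. rewrite /Defs.coord /u_0.
case: i h1 h2 => // i _ h2 /=. rewrite nth_cat size_nseq h2 nth_nseq h2 //.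
Qed.

Lemma coord_u1_mid n m i : (1 <= i <= m)%N ->
  coord (u_1 n m) i = if i == (m.+1)./2 + odd m.+1 then 0 else 1.
Proof.
move=> /andP [h1 h2]. rewrite /Defs.coord /u_1.
case: i h1 h2 => // i _ h2 /=. rewrite nth_cat size_map size_iota h2.
rewrite (nth_map 0%N); last by rewrite size_iota.
by rewrite nth_iota // add1n.
Qed.

Lemma psum_u0 n m p : (p <= m)%N -> psum (u_0 n m) p.+1 = u0_first n m + p%:Z.
Proof.
elim: p => [|p IH] hp.
  by rewrite psumS psum0 add0r /Defs.coord /u_0 /= addr0.
rewrite psumS IH; last by lia.
rewrite coord_u0_mid; last by lia. lia.
Qed.

Lemma psum_u1 n m p : (p <= m)%N ->
  psum (u_1 n m) p.+1 = u0_first n m + p%:Z - ((m.+1)./2 + odd m.+1 <= p)%N%:Z.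
Proof.
have hc : (1 <= (m.+1)./2 + odd m.+1)%N.
  have := odd_double_half m.+1. case: (odd m.+1) => /=; lia.
elim: p => [|p IH] hp.
  rewrite psumS psum0 add0r /Defs.coord /u_1 /=. 
  have -> : ((m.+1)./2 + odd m.+1 <= 0)%N = false by lia. lia.
rewrite psumS IH; last by lia.
rewrite coord_u1_mid; last by lia.
case: eqP => h; lia.
Qed.

Lemma u0_lb n m R j : (1 < n)%N -> m = (R + R + n)%N ->
  Gs n m R <= 2 * cost n m (u_0 n m) j.
Proof.
move=> hn hm.
have hn0 : (0 < n)%N by lia.
have hR : ((m - n) %/ 2)%N = R by lia.
have [q [hq _]] := mod_spec (- R%:Z) hn0.
rewrite /cost (rev_sum2 m (fun p => `|psum (u_0 n m) p.+1 - j * n%:Z|)) /Gs. apply: ler_sum => p _.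
have hp := ltn_ord p.
rewrite psum_u0; last by lia. rewrite psum_u0; last by lia.
rewrite /u0_first hR hq.
have := mul_cases (j + q) n. rewrite mulrDl.
rewrite /gfun. lia.
Qed.

Lemma arith_u1 (n R p m h o W b1 b2 b3 : int) :
  m = 2 * R + n + 1 -> 2 <= n -> 0 <= p <= m -> (W <= 0 \/ n <= W) ->
  n = 2 * h + o -> (o = 0 \/ o = 1) ->
  (b1 = 1 /\ R + 1 + h + o <= p \/ b1 = 0 /\ p < R + 1 + h + o) ->
  (b2 = 1 /\ R + 1 + h + o <= m - p \/ b2 = 0 /\ m - p < R + 1 + h + o) ->
  (b3 = 1 /\ p = R + h + o \/ b3 = 0 /\ p <> R + h + o) ->
  n + 2 * Num.max 0 (Num.max (R - p) (p - (m - R))) <=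
  `|p - b1 - R - W| + `|m - p - b2 - R - W| + b3.
Proof.
move=> hm hn hp hW hh ho h1 h2 h3.
case: h1 => [[-> h1]|[-> h1]]; case: h2 => [[-> h2]|[-> h2]]; case: h3 => [[-> h3]|[-> h3]];
  case: hW => hW; case: ho => ho; lia.
Qed.

Lemma u1_lb n m R j : (1 < n)%N -> m = (R + R + n + 1)%N ->
  Gs n m R <= 2 * cost n m (u_1 n m) j + 1.
Proof.
move=> hn hm.
have hn0 : (0 < n)%N by lia.
have hR : ((m - n) %/ 2)%N = R by lia.
have [q [hq _]] := mod_spec (- R%:Z) hn0.
set c := ((m.+1)./2 + odd m.+1)%N.
have hc : c = (R + 1 + (n./2 + odd n))%N.
  rewrite /c. have := odd_double_half m.+1. have := odd_double_half n.
  have -> : odd m.+1 = odd n.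
    have -> : (m.+1) = (n + (R.+1).*2)%N by rewrite -addnn; lia.
    by rewrite oddD odd_double addbF.
  case: (odd n) => /=; lia.
have hc2 : (c.-1 <= m)%N by lia.
rewrite /cost (rev_sum2 m (fun p => `|psum (u_1 n m) p.+1 - j * n%:Z|)) -(sum_ind1 hc2) -big_split /= /Gs. apply: ler_sum => p _.
have hp := ltn_ord p.
rewrite psum_u1; last by lia. rewrite psum_u1; last by lia.
rewrite -/c /u0_first hR hq.
have hW := mul_cases (j + q) n. rewrite mulrDl in hW.
have hh := odd_double_half n.
have e1 : m%:Z = 2 * R%:Z + n%:Z + 1 by lia.
have e2 : 2 <= n%:Z by lia.
have e3 : 0 <= p%:Z <= m%:Z by lia.
have e5 : n%:Z = 2 * (n./2)%N%:Z + (odd n)%N%:Z by lia.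
have B : ((odd n)%N%:Z = 0 \/ (odd n)%N%:Z = 1) by case: (odd n); [right|left].
have C1 : ((c <= p)%N%:Z = 1 /\ R%:Z + 1 + (n./2)%N%:Z + (odd n)%N%:Z <= p%:Z \/
           (c <= p)%N%:Z = 0 /\ p%:Z < R%:Z + 1 + (n./2)%N%:Z + (odd n)%N%:Z).
  (case: (leqP c p) => hc'; [left|right]; split => //; lia).
have C2 : ((c <= m - p)%N%:Z = 1 /\ R%:Z + 1 + (n./2)%N%:Z + (odd n)%N%:Z <= m%:Z - p%:Z \/
           (c <= m - p)%N%:Z = 0 /\ m%:Z - p%:Z < R%:Z + 1 + (n./2)%N%:Z + (odd n)%N%:Z).
  case: (leqP c (m - p)) => hc'; [left|right]; split => //; lia.
have C3 : (((p : nat) == c.-1)%:Z = 1 /\ p%:Z = R%:Z + (n./2)%N%:Z + (odd n)%N%:Z \/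
           ((p : nat) == c.-1)%:Z = 0 /\ p%:Z <> R%:Z + (n./2)%N%:Z + (odd n)%N%:Z).
  case: (eqVneq (p : nat) c.-1) => hc'; [left|right]; split => //; lia.
have HA := arith_u1 (n:=n) (R:=R) (p:=p) (m:=m) (h:=(n./2)%N) (o:=(odd n)%N) (W:=j * n%:Z + q * n%:Z)
  (b1 := (c <= p)%N%:Z) (b2 := (c <= m - p)%N%:Z) (b3 := ((p : nat) == c.-1)%:Z)
  e1 e2 e3 hW e5 B C1 C2 C3.
have hmp : (m - p)%N%:Z = m%:Z - p%:Z by clear -hp; lia.
rewrite hmp /gfun. move: HA. clear -hmp.
Time lia.
Qed.

Lemma big_choice (op : nat -> nat -> nat) (x0 : nat) (I : eqType) (r : seq I)
    (P : pred I) (F : I -> nat) : (forall x y, op x y = x \/ op x y = y) ->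
  \big[op/x0]_(i <- r | P i) F i = x0 \/
  exists i, [/\ i \in r, P i & \big[op/x0]_(i <- r | P i) F i = F i].
Proof.
move=> hop; elim: r => [|a r IH]; first by left; rewrite big_nil.
rewrite big_cons; case: ifP => hPa.
  case: (hop (F a) (\big[op/x0]_(j <- r | P j) F j)) => ->.
    by right; exists a; rewrite mem_head.
  case: IH => [->|[i [h1 h2 ->]]]; first by left.
  by right; exists i; rewrite in_cons h1 orbT.
case: IH => [->|[i [h1 h2 ->]]]; first by left.
by right; exists i; rewrite in_cons h1 orbT.
Qed.

Lemma big_minn_le (x0 : nat) (I : eqType) (r : seq I) (P : pred I) (F : I -> nat) k :
  k \in r -> P k -> (\big[minn/x0]_(i <- r | P i) F i <= F k)%N.
Proof.
elim: r => [|a r IH] //; rewrite in_cons big_cons => /orP [/eqP <-|hk] hP.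
  by rewrite hP geq_minl.
case: ifP => _; last exact: IH.
by rewrite geq_min IH ?orbT.
Qed.

Lemma big_maxn_ge (x0 : nat) (I : eqType) (r : seq I) (P : pred I) (F : I -> nat) k :
  k \in r -> P k -> (F k <= \big[maxn/x0]_(i <- r | P i) F i)%N.
Proof.
elim: r => [|a r IH] //; rewrite in_cons big_cons => /orP [/eqP <-|hk] hP.
  by rewrite hP leq_maxl.
case: ifP => _; last exact: IH.
by rewrite leq_max IH ?orbT.
Qed.

Lemma sum_window v (a b : nat) : (a <= b)%N -> forall N,
  \sum_(i < N | (a <= i < b)%N) coord v i = psum v (minn N b) - psum v (minn N a).
Proof.
move=> hab; elim=> [|N IH]; first by rewrite big_ord0 !min0n; lia.
rewrite big_mkcond big_ord_recr /= -big_mkcond IH.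
case: ifP => hc.
  have E1 : minn N.+1 b = N.+1 by lia. have E2 : minn N b = N by lia.
  have E3 : minn N.+1 a = a by lia. have E4 : minn N a = a by lia.
  rewrite ?E1 ?E2 ?E3 ?E4 psumS. lia.
case: (ltnP N a) => h1.
  have E1 : minn N.+1 b = N.+1 by lia. have E2 : minn N b = N by lia.
  have E3 : minn N.+1 a = N.+1 by lia. have E4 : minn N a = N by lia.
  rewrite ?E1 ?E2 ?E3 ?E4. lia.
have h2 : (b <= N)%N by move: hc; rewrite h1 /=; lia.
have E1 : minn N.+1 b = b by lia. have E2 : minn N b = b by lia.
have E3 : minn N.+1 a = a by lia. have E4 : minn N a = a by lia.
rewrite ?E1 ?E2 ?E3 ?E4. lia.
Qed.

Lemma hconv (H : nat) (x : int) (m : nat) :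
  (H%:R / 2 : rat) <= `|x%:~R - m%:R / 2| -> H%:Z <= `|x * 2 - m%:Z|.
Proof.
move=> h.
have e : ((x * 2 - m%:Z)%:~R : rat) = (x%:~R - m%:R / 2) * 2.
  by rewrite intrB intrM /=; field.
have : (H%:R : rat) <= `|(x * 2 - m%:Z)%:~R|.
  rewrite e normrM (ger0_norm (ler0n _ 2)).
  by rewrite -ler_pdivrMr.
by rewrite -intr_norm -[H%:R]/((H%:Z)%:~R) ler_int.
Qed.

Lemma coord_u0_last n m : coord (u_0 n m) m.+1 = ((- m%:Z - u0_first n m) %% n%:Z)%Z.
Proof. by rewrite /Defs.coord /u_0 /= nth_cat size_nseq ltnn subnn. Qed.

Lemma coord_u1_last n m :
  coord (u_1 n m) m.+1 = ((- (m%:Z - 1) - u0_first n m) %% n%:Z)%Z.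
Proof. by rewrite /Defs.coord /u_1 /= nth_cat size_map size_iota ltnn subnn. Qed.

Lemma vx_u0 n m : (1 < n)%N -> is_vertex n m (u_0 n m).
Proof.
move=> hn; have hn0 : (0 < n)%N by lia.
have [q1 [hq1 hr1]] := mod_spec (- ((m - n) %/ 2)%N%:Z) hn0.
have [q2 [hq2 hr2]] := mod_spec (- m%:Z - u0_first n m) hn0.
split.
- by rewrite /u_0 /= size_cat size_nseq /= addn1.
- by rewrite /Defs.coord /u_0 /=.
- by rewrite coord_u0_last.
- by move=> i hi; rewrite coord_u0_mid.
- rewrite -/(psum (u_0 n m) m.+2) psumS psum_u0 // coord_u0_last hq2.
  apply/dvdzP; exists (- q2). lia.
Qed.

Lemma vx_u1 n m : (1 < n)%N -> (2 <= m)%N -> is_vertex n m (u_1 n m).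
Proof.
move=> hn hm; have hn0 : (0 < n)%N by lia.
have [q1 [hq1 hr1]] := mod_spec (- ((m - n) %/ 2)%N%:Z) hn0.
have [q2 [hq2 hr2]] := mod_spec (- (m%:Z - 1) - u0_first n m) hn0.
split.
- by rewrite /u_1 /= size_cat size_map size_iota /= addn1.
- by rewrite /Defs.coord /u_1 /=.
- by rewrite coord_u1_last.
- by move=> i hi; rewrite coord_u1_mid //; case: ifP.
- rewrite -/(psum (u_1 n m) m.+2) psumS psum_u1 // coord_u1_last hq2.
  have -> : ((m.+1)./2 + odd m.+1 <= m)%N.
    have := odd_double_half m.+1. case: (odd m.+1) => /=; lia.
  apply/dvdzP; exists (- q2). lia.
Qed.

Lemma cost_abs n m v j : (absz (cost n m v j))%:Z = cost n m v j.
Proof. by rewrite abszE ger0_norm // cost_ge0. Qed.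

Lemma v_all n m v : (1 < n)%N -> (n <= m)%N -> is_vertex n m v ->
  h_ge n m v (h_nm n m) -> sum_Ic n m v = n%:Z ->
  exists R k0, [/\ m = (R + R + (if ~~ odd (m - n) then n else n.+1))%N &
     cost n m v k0 + cost n m v (k0 + 1) <= Gs n m R].
Proof.
move=> hn hnm hv hh hsum.
case: (hv) => hsz h0c hm1 hmid hdiv.
set H := if ~~ odd (m - n) then n else n.+1.
have hhnm : h_nm n m = H%:R / 2 by rewrite /h_nm /H; case: ifP.
have [R hR] : exists R, m = (R + R + H)%N.
  exists ((m - n)./2). have := odd_double_half (m - n). rewrite /H.
  case: (odd (m - n)) => /=; lia.
have hH : (2 <= H)%N by rewrite /H; case: ifP; lia.
have hpiv : forall k : nat, (k < m.+3)%N -> piv n m v (k%:Z - 1) = (n%:Z %| psum v k)%Z.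
  move=> k hk. rewrite /piv.
  rewrite (_ : k%:Z - 1 + 1 = k%:Z); last by lia.
  rewrite absz_nat.
  have -> : (-1 <= k%:Z - 1 <= (m.+1)%:Z) by apply/andP; split; lia.
  done.
have hhge : forall k, (k < m.+3)%N -> (n%:Z %| psum v k)%Z ->
    H%:Z <= `|(k%:Z - 1) * 2 - m%:Z|.
  move=> k hk hd. apply: hconv. rewrite -hhnm. apply: hh. by rewrite hpiv.
move: hsum. rewrite /sum_Ic /p_l /p_r.
set Kl := (\max_(k < m.+3 | piv n m v (k%:Z - 1)%R && ((k%:Z - 1) * 2 < m%:Z)%R) (k : nat))%N.
set Kr := (\big[minn/m.+2]_(k < m.+3 | piv n m v (k%:Z - 1)%R && (m%:Z <= (k%:Z - 1) * 2)%R) (k : nat))%N.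
move=> hsum.
have hmaxop : forall x y, maxn x y = x \/ maxn x y = y.
  by move=> x y; rewrite /maxn; case: ifP; [right|left].
have hminop : forall x y, minn x y = x \/ minn x y = y.
  by move=> x y; rewrite /minn; case: ifP; [left|right].
have [hKl1 hKl2 hKl3] : [/\ (Kl < m.+3)%N, (n%:Z %| psum v Kl)%Z & (Kl%:Z - 1) * 2 < m%:Z].
  case: (big_choice 0%N (index_enum 'I_m.+3)
     (fun k : 'I_m.+3 => piv n m v (k%:Z - 1) && ((k%:Z - 1) * 2 < m%:Z))
     (fun k : 'I_m.+3 => (k : nat)) hmaxop) => [E|[i [_ /andP [h1 h2] E]]].
    rewrite /Kl E psum0; split; [lia | exact: dvdz0 | lia].
  rewrite /Kl E. have hi := ltn_ord i. move: h1; rewrite (hpiv i hi) => h1. by split.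
have hKlmax : forall k, (k < m.+3)%N -> (n%:Z %| psum v k)%Z -> (k%:Z - 1) * 2 < m%:Z ->
    (k <= Kl)%N.
  move=> k hk h1 h2.
  have := @big_maxn_ge 0%N _ (index_enum 'I_m.+3) (fun k : 'I_m.+3 => piv n m v (k%:Z - 1) && ((k%:Z - 1) * 2 < m%:Z))
     (fun k : 'I_m.+3 => (k : nat)) (Ordinal hk) (mem_index_enum _).
  rewrite /= hpiv // h1 h2. by move/(_ isT).
have [hKr1 hKr2 hKr3] : [/\ (Kr < m.+3)%N, (n%:Z %| psum v Kr)%Z & m%:Z <= (Kr%:Z - 1) * 2].
  case: (big_choice m.+2 (index_enum 'I_m.+3)
     (fun k : 'I_m.+3 => piv n m v (k%:Z - 1) && (m%:Z <= (k%:Z - 1) * 2))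
     (fun k : 'I_m.+3 => (k : nat)) hminop) => [E|[i [_ /andP [h1 h2] E]]].
    rewrite /Kr E; split => //; lia.
  rewrite /Kr E. have hi := ltn_ord i. move: h1; rewrite (hpiv i hi) => h1. by split.
have hKrmin : forall k, (k < m.+3)%N -> (n%:Z %| psum v k)%Z -> m%:Z <= (k%:Z - 1) * 2 ->
    (Kr <= k)%N.
  move=> k hk h1 h2.
  have := @big_minn_le m.+2 _ (index_enum 'I_m.+3) (fun k : 'I_m.+3 => piv n m v (k%:Z - 1) && (m%:Z <= (k%:Z - 1) * 2))
     (fun k : 'I_m.+3 => (k : nat)) (Ordinal hk) (mem_index_enum _).
  rewrite /= hpiv // h1 h2. by move/(_ isT).
have hKlR : (Kl <= R.+1)%N by have := hhge Kl hKl1 hKl2; lia.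
have hKrR : (R + H + 1 <= Kr)%N by have := hhge Kr hKr1 hKr2; lia.
have hKlr : (Kl <= Kr)%N by lia.
have hS : psum v Kr = psum v Kl + n%:Z.
  move: hsum.
  rewrite (eq_bigl (fun i : 'I_m.+2 => (Kl <= i < Kr)%N)); last first.
    move=> i /=. apply/idP/idP => /andP [h1 h2]; apply/andP; split; lia.
  rewrite sum_window //.
  have -> : minn m.+2 Kr = Kr by lia. have -> : minn m.+2 Kl = Kl by lia.
  lia.
have hnp : forall i, (Kl < i < Kr)%N -> ~~ (n%:Z %| psum v i)%Z.
  move=> i hi; apply/negP => hd.
  case: (ltrP ((i%:Z - 1) * 2) m%:Z) => h.
    have := hKlmax i (ltac:(lia)) hd h. lia.
  have := hKrmin i (ltac:(lia)) hd h. lia.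
have [k0 hk0] := v_core hn hv hR hH hKlR hKrR (ltac:(lia)) hKl2 hS hnp.
by exists R, k0; split.
Qed.

Unset Implicit Arguments.
Theorem lemma5p27 (n m : nat) (v : seq int) :
  (1 < n)%N -> (n <= m)%N ->
  is_vertex n m v ->
  h_ge n m v (h_nm n m) ->
  sum_Ic n m v = n%:Z ->
  (exists k, walk n m k v (zero_vertex m)) /\
  (dist n m v (zero_vertex m) <= D_nm n m)%N.
Proof.
move=> hn hnm hv hh hsum.
have [R [k0 [hR hk]]] := v_all hn hnm hv hh hsum.
have e0 := cost_abs n m v k0. have e1 := cost_abs n m v (k0 + 1).
have w0 := walk_ub hn hv (esym e0).
have w1 := walk_ub hn hv (esym e1).
have hd0 := (dist_spec w0).2 _ w0.
have hd1 := (dist_spec w1).2 _ w1.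
split; first by exists (absz (cost n m v k0)).
rewrite /D_nm. case: ifP => hodd; rewrite hodd /= in hR.
  have eu := cost_abs n m (u_0 n m) 0.
  have wu := walk_ub hn (vx_u0 m hn) (esym eu).
  have [wd _] := dist_spec wu.
  have [j hj] := walk_lb wd. rewrite dcost_zero in hj.
  have hl := u0_lb j hn hR.
  lia.
have hR' : m = (R + R + n + 1)%N by lia.
have eu := cost_abs n m (u_1 n m) 0.
have wu := walk_ub hn (vx_u1 (m:=m) hn (ltac:(lia))) (esym eu).
have [wd _] := dist_spec wu.
have [j hj] := walk_lb wd. rewrite dcost_zero in hj.
have hl := u1_lb j hn hR'.
apply: leq_trans (leq_maxr _ _). lia.
Qed.
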